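(* Let $\mathbb{L}>0$, $\sigma>0$, and let $V,p\colon\mathbb{R}\to\mathbb{R}$ satisfy: (i) $V,p\in C^2(\mathbb{R})$, $V(0)=0$, $p(0)=0$, and $p$ is $\mathbb{L}$-periodic; (ii) $V'$ is globally Lipschitz on $\mathbb{R}$; (iii) there exist $\beta>0$ and $R\ge1$ such that $-\operatorname{sign}(x)V'(x)\le-\beta|x|$ for all $|x|\ge R$. For $\varepsilon>0$ define $$f_\varepsilon(x)=\int_0^x\exp\!\left(\frac1{\sigma^2}\left(V(z)+p\left(\frac z\varepsilon\right)\right)\right)\mathrm{d}z,\quad g_\varepsilon=f_\varepsilon^{-1},\quad m^\varepsilon(x)=\frac{1}{\sqrt{2\sigma^2}\,f_\varepsilon'(g_\varepsilon(x))},$$ $$b^\varepsilon(x)=-V'(x)-\frac1\varepsilon p'\!\left(\frac x\varepsilon\right),\qquad B^\varepsilon(x)=-\frac12b^\varepsilon(x)^2-\frac12(b^\varepsilon)'(x),$$ and, for $h>0$ and $x,y\in\mathbb{R}$, $$p^\varepsilon(h,x,y)=\frac{m^\varepsilon(y)}{\sqrt{2\pi h}}\left(\frac{m^\varepsilon(y)}{m^\varepsilon(x)}\right)^{1/2}\exp\!\left(-\frac1{2h}\left(\int_x^ym^\varepsilon(z)\,\mathrm{d}z\right)^2\right)\mathbb{E}\!\left[\exp\!\left(h\int_0^1B^\varepsilon(\mathscr N(h,g_\varepsilon(x),g_\varepsilon(y),u))\,\mathrm{d}u\right)\right],$$ where, for $a,b\in\mathbb{R}$, $(\mathscr N(h,a,b,u))_{u\in(0,1)}$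 is a jointly measurable process such that $\mathscr N(h,a,b,u)\sim\mathcal N(a+u(b-a),hu(1-u))$ for each $u\in(0,1)$. Then there exist constants $K_1,K_2>0$ independent of $\varepsilon$ such that for all $x,y\in\mathbb{R}$ and all sufficiently small $\varepsilon>0$ satisfying $K_1\varepsilon^4<\min\{2,1/(8\sigma^2)\}$, $$p^\varepsilon(\varepsilon^2,x,y)\le e^{\frac{K_2}2}\sqrt{\frac2{2-K_1\varepsilon^4}}\exp\!\left(2K_1\varepsilon^2g_\varepsilon(x)^2\right)\frac{m^\varepsilon(y)^{3/2}}{m^\varepsilon(x)^{1/2}}\frac1{\sqrt{2\pi\varepsilon^2}}\exp\!\left(-\frac{1-8K_1\sigma^2\varepsilon^4}{4\sigma^2\varepsilon^2}\left(g_\varepsilon(y)-g_\varepsilon(x)\right)^2\right).$$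
   Context: $p^\varepsilon(h,x,y)$ is (by a classical formula for one-dimensional diffusions) the transition probability density of the process $\xi^\varepsilon=f_\varepsilon(X^\varepsilon)$, where $X^\varepsilon$ solves $\mathrm{d}X_t^\varepsilon=-V'(X_t^\varepsilon)\mathrm{d}t-\frac1\varepsilon p'(X_t^\varepsilon/\varepsilon)\mathrm{d}t+\sqrt{2\sigma^2}\,\mathrm{d}W_t$; $\xi^\varepsilon$ satisfies $\mathrm{d}\xi_t^\varepsilon=\frac{1}{m^\varepsilon(\xi_t^\varepsilon)}\mathrm{d}W_t$. Note $f_\varepsilon'>0$, so $g_\varepsilon$ is well defined. *)

(* Defs.v *)
From HB Require Import structures.
From mathcomp Require Import all_boot all_order all_algebra.
From mathcomp Require Import all_classical all_reals all_analysis.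
Set Implicit Arguments. Unset Strict Implicit. Unset Printing Implicit Defensive.
Import Order.TTheory GRing.Theory Num.Theory.
Import numFieldNormedType.Exports.
Local Open Scope classical_set_scope.
Local Open Scope ring_scope.

Section defs.
Context {R : realType}.

Definition C2 (f : R -> R) : Prop :=
  (forall x, derivable f x 1) /\ (forall x, derivable (derive1 f) x 1) /\
  continuous (derive1 (derive1 f)).

Definition oint (a b : R) (f : R -> R) : R :=
  if a <= b then Rintegral lebesgue_measure `[a, b] f
  else - Rintegral lebesgue_measure `[b, a] f.

Variables (V p : R -> R) (sigma : R).

Definition feps (eps : R) (x : R) : R :=
  oint 0 x (fun z => expR ((V z + p (z / eps)) / sigma ^+ 2)).

(* inverse function of feps (feps is a bijection R -> R) *)
Definition geps (eps : R) (y : R) : R := xget 0 [set x | feps eps x = y].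

Definition meps (eps : R) (x : R) : R :=
  1 / (Num.sqrt (2 * sigma ^+ 2) * derive1 (feps eps) (geps eps x)).

Definition beps (eps : R) (x : R) : R :=
  - derive1 V x - eps^-1 * derive1 p (x / eps).

Definition Beps (eps : R) (x : R) : R :=
  - (1/2) * (beps eps x) ^+ 2 - (1/2) * derive1 (beps eps) x.

Variables (d : measure_display) (Omega : measurableType d)
  (P : probability Omega R) (N : R -> R -> R -> R -> Omega -> R).

(* p^eps(h,x,y), valued in extended reals (the expectation may be +oo) *)
Definition peps (eps h x y : R) : \bar R :=
  ((meps eps y / Num.sqrt (2 * pi * h)) * Num.sqrt (meps eps y / meps eps x)
    * expR (- (1 / (2 * h)) * (oint x y (meps eps)) ^+ 2))%:E *
  (\int[P]_(w in setT)
     expeR (h%:E * \int[lebesgue_measure]_(u in `]0%R, 1%R[)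
                     (Beps eps (N h (geps eps x) (geps eps y) u w))%:E))%E.

End defs.

(* Main.v *)
Require Import Defs.
From HB Require Import structures.
From mathcomp Require Import all_boot all_order all_algebra.
From mathcomp Require Import all_classical all_reals all_analysis.
From mathcomp Require Import ring lra.
Import Order.TTheory GRing.Theory Num.Theory.
Import numFieldNormedType.Exports.
Local Open Scope classical_set_scope.
Local Open Scope ring_scope.


Lemma deriv_lip_bound (R : realType) (g : R -> R) (L x : R) :
  (forall x y, `|g x - g y| <= L * `|x - y|) -> derivable g x 1 ->
  `|derive1 g x| <= L.
Proof.
move=> Lg dg; rewrite derive1E.
have c : (h^-1 *: ((g \o shift x) (h *: 1) - g x)) @[h --> 0^'] --> 'D_1 g x := dg.
have B : \forall h \near 0^', `|h^-1 *: ((g \o shift x) (h *: 1) - g x)| <= L.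
  near=> h.
  have h0 : h != 0 by near: h; exact: nbhs_dnbhs_neq.
  rewrite /= normrZ normrV ?unitfE // scaler1.
  rewrite ler_pdivrMl ?normr_gt0 // mulrC.
  by have := Lg (h + x) x; rewrite addrK.
rewrite ler_norml; apply/andP; split.
- have := @closed_cvg _ _ _ _ _ _ (@closed_ge R (- L)) _ _ c; apply.
  by apply: filterS B => h; rewrite ler_norml => /andP[].
- have := @closed_cvg _ _ _ _ _ _ (@closed_le R L) _ _ c; apply.
  by apply: filterS B => h; rewrite ler_norml => /andP[].
Unshelve. all: by end_near.
Qed.

Lemma periodic_derive1 (R : realType) (h : R -> R) (LL : R) :
  (forall x, h (x + LL) = h x) -> forall x, derive1 h (x + LL) = derive1 h x.
Proof.
move=> hp x; rewrite !derive1E /derive.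
have -> : (fun t : R => t^-1 *: ((h \o shift (x + LL)) (t *: 1) - h (x + LL))) =
          (fun t : R => t^-1 *: ((h \o shift x) (t *: 1) - h x)).
  by apply/funext => t /=; rewrite addrA !hp.
by [].
Qed.

Lemma periodic_intshift (R : realType) (h : R -> R) (LL : R) :
  (forall x, h (x + LL) = h x) -> forall (k : int) x, h (x + k%:~R * LL) = h x.
Proof.
move=> hp.
have hn : forall (n : nat) x, h (x + n%:R * LL) = h x.
  elim=> [|n IH] x; first by rewrite mul0r addr0.
  by rewrite -addn1 natrD mulrDl mul1r addrA hp IH.
case=> n x.
  exact: hn.
rewrite NegzE mulrNz mulNr.
have := hn n.+1 (x - n.+1%:R * LL); rewrite subrK => <-; done.
Qed.

Lemma periodic_bounded (R : realType) (h : R -> R) (LL : R) :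
  0 < LL -> continuous h -> (forall x, h (x + LL) = h x) ->
  exists M, 0 <= M /\ forall x, `|h x| <= M.
Proof.
move=> LL0 hc hp.
have [c c0L cmax] : exists2 c, c \in `[0, LL] & forall t, t \in `[0, LL] -> `|h t| <= `|h c|.
  apply: EVT_max; first exact: ltW.
  apply: continuous_subspaceT => t; exact: (continuous_comp (hc t) (@norm_continuous _ _ _)).
exists `|h c|; split => // x.
pose k := Num.floor (x / LL).
have -> : h x = h (x - k%:~R * LL + k%:~R * LL) by rewrite subrK.
rewrite periodic_intshift //; apply: cmax.
have := floor_itv (x / LL); rewrite -/k => /andP[k1 k2].
have k1' : k%:~R * LL <= x by rewrite -ler_pdivlMr.
have k2' : x < (k%:~R + 1) * LL by rewrite -ltr_pdivrMr // -[1]/(1%:~R) -intrD.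
rewrite in_itv /=; apply/andP; split; lra.
Qed.
Section fe.
Context {R : realType} (V p : R -> R) (sigma eps MV Mp : R).
Hypotheses (s0 : 0 < sigma) (e0 : 0 < eps) (dV : forall x, derivable V x 1)
  (dp : forall x, derivable p x 1) (VB : forall x, - MV <= V x)
  (pB : forall x, `|p x| <= Mp).

Definition Fe (z : R) := expR ((V z + p (z / eps)) / sigma ^+ 2).

Lemma cV : continuous V.
Proof. by move=> x; apply: differentiable_continuous; exact/derivable1_diffP. Qed.
Lemma cp : continuous p.
Proof. by move=> x; apply: differentiable_continuous; exact/derivable1_diffP. Qed.

Lemma Fe_cont : continuous Fe.
Proof.
move=> x; rewrite /Fe.
apply: (@continuous_comp _ _ _ (fun z => (V z + p (z / eps)) / sigma ^+ 2) expR);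
  last exact: continuous_expR.
apply: cvgM; last exact: cvg_cst.
apply: cvgD; first exact: cV.
have h1 : {for x, continuous (fun z : R => z / eps)}.
  by apply: cvgM; [exact: cvg_id|exact: cvg_cst].
exact: (continuous_comp h1 (cp _)).
Qed.

Definition c0 := expR ((- MV - Mp) / sigma ^+ 2).

Lemma c0_gt0 : 0 < c0. Proof. exact: expR_gt0. Qed.

Lemma Fe_ge z : c0 <= Fe z.
Proof.
rewrite /c0 /Fe ler_expR ler_pM2r ?invr_gt0 ?exprn_gt0 //.
have := VB z; have := pB (z / eps); rewrite ler_norml => /andP[h1 h2]; lra.
Qed.

Lemma Fe_gt0 z : 0 < Fe z. Proof. exact: expR_gt0. Qed.

Lemma Fe_int a b : lebesgue_measure.-integrable `[a, b] (EFin \o Fe).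
Proof.
apply: continuous_compact_integrable; first exact: segment_compact.
apply: continuous_subspaceT => x; exact: Fe_cont.
Qed.

Definition Phi a t := Rintegral lebesgue_measure `[a, t] Fe.

Lemma feps_Phi a t : a <= 0 -> a <= t -> feps V p sigma eps t = Phi a t - Phi a 0.
Proof.
move=> a0 at_; rewrite /feps /oint /Phi.
case: ifPn => t0.
  rewrite (@Rintegral_itvB _ Fe (BLeft a) (BRight t) 0) //; last exact: Fe_int.
  rewrite Rintegral_itv_obnd_cbnd //.
  by apply: integrableS (Fe_int 0 t) => //; apply: subset_itv_oc_cc.
rewrite -[in RHS]opprB; congr (- _); symmetry.
rewrite (@Rintegral_itvB _ Fe (BLeft a) (BRight 0) t) //.
- rewrite Rintegral_itv_obnd_cbnd //.
  by apply: integrableS (Fe_int t 0) => //; apply: subset_itv_oc_cc.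
- exact: Fe_int.
- by rewrite bnd_simp ltW // ltNge.
Qed.

Lemma feps_derive (x : R) : is_derive x 1 (feps V p sigma eps) (Fe x).
Proof.
pose a := Num.min x 0 - 1.
have m1 : Num.min x 0 <= x by rewrite ge_min lexx.
have m2 : Num.min x 0 <= 0 by rewrite ge_min lexx orbT.
have ax : a < x by rewrite /a; lra.
have a0 : a <= 0 by rewrite /a; lra.
have x1 : x < x + 1 by rewrite ltrDl.
have [dP EP] := @continuous_FTC1_closed R Fe a x (x + 1) x1
  (Fe_int a (x + 1)) ax (Fe_cont x).
have iP : is_derive x 1 (Phi a) (Fe x).
  by rewrite -EP derive1E; apply: derivableP.
have := is_deriveB iP (is_derive_cst (Phi a 0) x 1); rewrite subr0.
apply: near_eq_is_derive.
near=> t; rewrite /= (@feps_Phi a t) //.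
near: t; exact: lt_le_nbhsr.
Unshelve. all: by end_near.
Qed.

Local Notation f := (feps V p sigma eps).
Local Notation g := (geps V p sigma eps).

Lemma feps_cont : continuous f.
Proof.
move=> x; apply: differentiable_continuous; apply/derivable1_diffP.
by have [] := feps_derive x.
Qed.

Lemma feps0 : f 0 = 0.
Proof. by rewrite /feps /oint lexx set_itv1 Rintegral_set1. Qed.

Lemma feps_mvt s t : s <= t -> c0 * (t - s) <= f t - f s.
Proof.
move=> st.
have [c _ ->] := @MVT_segment R f Fe s t st (fun x _ => feps_derive x)
  (continuous_subspaceT feps_cont).
by apply: ler_wpM2r; [rewrite subr_ge0|exact: Fe_ge].
Qed.

Lemma feps_lt s t : s < t -> f s < f t.
Proof.
move=> st; have := feps_mvt s t (ltW st).
have : 0 < c0 * (t - s) by rewrite mulr_gt0 ?c0_gt0 ?subr_gt0.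
lra.
Qed.

Lemma feps_inj : injective f.
Proof.
move=> s t fst; case: (ltgtP s t) => // [/feps_lt|/feps_lt]; rewrite fst ltxx //.
Qed.

Lemma feps_surj y : exists t, f t = y.
Proof.
have c0p := c0_gt0.
pose b := `|y| / c0 + 1.
have b0 : 0 <= b by rewrite /b addr_ge0 // divr_ge0 // ltW.
have cb : c0 * b = `|y| + c0 by rewrite /b mulrDr mulr1 [c0 * _]mulrC divfK ?gt_eqF.
have h1 := feps_mvt 0 b b0; rewrite feps0 subr0 in h1.
have b0' : - b <= 0 by rewrite oppr_le0.
have h2 := feps_mvt (- b) 0 b0'; rewrite feps0 sub0r opprK in h2.
have yb : - `|y| <= y <= `|y| by rewrite -ler_norml.
have nb : - b <= b by lra.
have [c _ fc] : exists2 c, c \in `[- b, b] & f c = y.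
  apply: (@IVT R f (- b) b y nb (continuous_subspaceT feps_cont)).
  have hmin : Num.min (f (- b)) (f b) <= y by rewrite ge_min; apply/orP; left; lra.
  have hmax : y <= Num.max (f (- b)) (f b) by rewrite le_max; apply/orP; right; lra.
  by rewrite hmin hmax.
by exists c.
Qed.

Lemma gK t : g (f t) = t.
Proof.
rewrite /geps; apply: feps_inj.
by have := @xgetPex _ 0 [set x | f x = f t] (ex_intro _ t erefl).
Qed.

Lemma fK y : f (g y) = y.
Proof.
rewrite /geps; have [t ft] := feps_surj y.
exact: (@xgetPex _ 0 [set x | f x = y] (ex_intro _ t ft)).
Qed.

Lemma geps_derive (y : R) : is_derive y 1 g (Fe (g y))^-1.
Proof.
rewrite -{1}(fK y).
apply: is_derive_inverse.
- by apply: filterE => t; exact: gK.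
- by apply: filterE => t; exact: feps_cont.
- exact: feps_derive.
- by rewrite gt_eqF // Fe_gt0.
Qed.

Lemma geps_cont : continuous g.
Proof.
move=> x; apply: differentiable_continuous; apply/derivable1_diffP.
by have [] := geps_derive x.
Qed.

Lemma derive_feps t : derive1 f t = Fe t.
Proof. by rewrite derive1E; have [_ ->] := feps_derive t. Qed.



Local Notation m := (meps V p sigma eps).
Definition S := Num.sqrt (2 * sigma ^+ 2).

Lemma S_gt0 : 0 < S.
Proof. by rewrite /S sqrtr_gt0 mulr_gt0 // exprn_gt0. Qed.

Lemma meps_eq y : m y = (S * Fe (g y))^-1.
Proof. by rewrite /meps derive_feps div1r. Qed.

Lemma meps_gt0 y : 0 < m y.
Proof. by rewrite meps_eq invr_gt0 mulr_gt0 ?S_gt0 ?Fe_gt0. Qed.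

Lemma meps_cont : continuous m.
Proof.
have -> : m = (fun y => (S * Fe (g y))^-1) by apply/funext => y; exact: meps_eq.
move=> y; apply: cvgV; first by rewrite mulf_neq0 ?gt_eqF ?S_gt0 ?Fe_gt0.
apply: cvgM; first exact: cvg_cst.
exact: (continuous_comp (geps_cont y) (Fe_cont _)).
Qed.

Definition G := S^-1 *: g.

Lemma G_derive (t : R) : is_derive t 1 G (m t).
Proof.
rewrite meps_eq invfM.
exact: is_deriveZ (geps_derive t).
Qed.

Lemma G_cont : continuous G.
Proof.
move=> x; apply: differentiable_continuous; apply/derivable1_diffP.
by have [] := G_derive x.
Qed.

Lemma int_meps_lt x y : x < y ->
  Rintegral lebesgue_measure `[x, y] m = G y - G x.
Proof.
move=> xy; rewrite /Rintegral (@continuous_FTC2 R m G x y xy) //.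
- exact: continuous_subspaceT meps_cont.
- split.
  + by move=> t _; have [] := G_derive t.
  + exact: cvg_at_right_filter (G_cont x).
  + exact: cvg_at_left_filter (G_cont y).
- by move=> t _; rewrite derive1E; have [_ ->] := G_derive t.
Qed.

Lemma oint_meps x y : oint x y m = S^-1 * (g y - g x).
Proof.
have GE t : G t = S^-1 * g t by [].
rewrite /oint; case: ifPn => xy.
  move: xy; rewrite le_eqVlt => /predU1P[->|xy].
    by rewrite set_itv1 Rintegral_set1 subrr mulr0.
  by rewrite int_meps_lt // !GE mulrBr.
rewrite -ltNge in xy.
by rewrite int_meps_lt // !GE -mulrBr -mulrN opprB.
Qed.
End fe.

Lemma V_lower (R : realType) (V : R -> R) (beta Rr : R) :
  (forall x, derivable V x 1) -> 0 < beta -> 1 <= Rr ->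
  (forall x, Rr <= `|x| -> - (Num.sg x * derive1 V x) <= - (beta * `|x|)) ->
  exists MV, forall x, - MV <= V x.
Proof.
move=> dV b0 R1 hV.
have cV : continuous V.
  by move=> x; apply: differentiable_continuous; exact/derivable1_diffP.
have iV (t : R) : is_derive t 1 V (derive1 V t) by rewrite derive1E; apply: derivableP.
have RR : - Rr <= Rr by lra.
have [c _ cmax] := @EVT_max R (fun x => `|V x|) (- Rr) Rr RR
  (continuous_subspaceT (fun t => continuous_comp (cV t) (@norm_continuous _ _ _))).
exists `|V c|.
have hb t : - Rr <= t <= Rr -> - `|V c| <= V t.
  move=> ht; have := cmax t; rewrite in_itv /= ht => /(_ isT).
  by rewrite ler_norml => /andP[].
move=> x; case: (ltrP Rr x) => xR.
  have [c' + E] := @MVT_segment R V (derive1 V) Rr x (ltW xR)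
    (fun t _ => iV t) (continuous_subspaceT cV).
  rewrite in_itv /= => /andP[c1 c2].
  have c'0 : 0 < c' by lra.
  have := hV c'; rewrite gtr0_sg // mul1r gtr0_norm // => /(_ c1) h.
  have : 0 <= derive1 V c' * (x - Rr).
    by apply: mulr_ge0; [have : 0 <= beta * c' by apply: mulr_ge0; lra|]; lra.
  have := hb Rr; rewrite RR lexx /= => /(_ isT); lra.
case: (ltrP x (- Rr)) => xR'.
  have [c' + E] := @MVT_segment R V (derive1 V) x (- Rr) (ltW xR')
    (fun t _ => iV t) (continuous_subspaceT cV).
  rewrite in_itv /= => /andP[c1 c2].
  have c'0 : c' < 0 by lra.
  have := hV c'; rewrite ltr0_sg // ltr0_norm // mulN1r opprK => h.
  have h' : derive1 V c' <= 0.
    have hc : Rr <= - c' by lra.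
    have := h hc; have : 0 <= beta * - c' by apply: mulr_ge0; lra.
    lra.
  have : derive1 V c' * (- Rr - x) <= 0.
    by apply: mulr_le0_ge0 => //; lra.
  have := hb (- Rr); rewrite RR lexx /= => /(_ isT); lra.
by apply: hb; rewrite xR xR'.
Qed.

Lemma Beps_bound (R : realType) (V p : R -> R) (eps L M2 : R) :
  0 < eps -> (forall x, derivable (derive1 V) x 1) ->
  (forall x, derivable (derive1 p) x 1) ->
  (forall x, `|derive1 (derive1 V) x| <= L) ->
  (forall x, `|derive1 (derive1 p) x| <= M2) ->
  forall x, Beps V p eps x <= (L + M2 / eps ^+ 2) / 2.
Proof.
move=> e0 dV1 dp1 hL hM x.
pose s := fun x : R => x / eps.
have sD (y : R) : is_derive y 1 s eps^-1.
  have := is_deriveZ eps^-1 (is_derive_id y 1); rewrite scaler1.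
  apply: near_eq_is_derive; apply: filterE => t.
  by rewrite /s /= mulrC.
have hD (y : R) : is_derive y 1 (derive1 p \o s)
    (derive1 (derive1 p) (y / eps) * eps^-1).
  have ds : derivable s y 1 by have [] := sD y.
  have dcomp : derivable (derive1 p \o s) y 1.
    apply/derivable1_diffP; apply: differentiable_comp.
    - exact/derivable1_diffP.
    - apply/derivable1_diffP; exact: dp1.
  have E : derive1 (derive1 p \o s) y = derive1 (derive1 p) (y / eps) * eps^-1.
    rewrite (derive1_comp ds (dp1 (s y))).
    have -> : derive1 s y = eps^-1 by rewrite derive1E; have [_ ->] := sD y.
    by [].
  rewrite -E derive1E; exact: derivableP.
have H := is_deriveB (is_deriveN (derivableP (dV1 x))) (is_deriveZ eps^-1 (hD x)).
have bd : is_derive x 1 (beps V p eps)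
   (- 'D_1 (derive1 V) x - eps^-1 *: (derive1 (derive1 p) (x / eps) * eps^-1)).
  by apply: (near_eq_is_derive _ H); apply: filterE => t.
rewrite /Beps derive1E; have [_ ->] := bd.
rewrite -derive1E.
rewrite -[eps^-1 *: _]/(eps^-1 * _).
have h1 := hL x; have h2 := hM (x / eps).
rewrite ler_norml in h1; rewrite ler_norml in h2.
move: h1 h2 => /andP[h1 h1'] /andP[h2 h2'].
have ie : 0 <= eps^-1 * eps^-1 by rewrite mulr_ge0 // ltW // invr_gt0.
have h3 : eps^-1 * (derive1 (derive1 p) (x / eps) / eps) <= M2 / eps ^+ 2.
  have -> : eps^-1 * (derive1 (derive1 p) (x / eps) / eps) =
            derive1 (derive1 p) (x / eps) / eps / eps by rewrite mulrC.
  rewrite expr2 invfM mulrA.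
  have ie' : 0 <= eps^-1 by rewrite ltW // invr_gt0.
  by apply: ler_wpM2r => //; apply: ler_wpM2r => //; lra.
have h4 : 0 <= beps V p eps x ^+ 2 by apply: sqr_ge0.
move: h3 h4.
set T := eps^-1 * _; set U := M2 / _; set B2 := _ ^+ 2.
move=> h3 h4.
have key : forall (A T U B2 : R), - L <= A -> A <= L -> T <= U -> 0 <= B2 ->
  - (1 / 2) * B2 - 1 / 2 * (- A - T) <= (L + U) / 2 by move=> *; lra.
exact: key h1 h1' h3 h4.
Qed.

Lemma le_integral_nomeas (d : measure_display) (T : measurableType d) (R : realType)
  (mu : measure T R) (D : set T) (f g : T -> \bar R) :
  (forall x, D x -> (0 <= f x)%E) -> (forall x, D x -> (0 <= g x)%E) ->
  (forall x, D x -> (f x <= g x)%E) ->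
  (\int[mu]_(x in D) f x <= \int[mu]_(x in D) g x)%E.
Proof.
move=> f0 g0 fg; rewrite !ge0_integralE //; apply: ereal_sup_le => _ [h hf <-].
exists h => // x; apply: le_trans (hf x) _; rewrite /patch; case: ifPn => //.
by rewrite inE => /fg.
Qed.

Lemma int_le_C (d : measure_display) (T : measurableType d) (R : realType)
  (mu : measure T R) (D : set T) (f : T -> R) (C : R) :
  measurable D -> mu D = 1%E -> 0 <= C -> (forall x, D x -> f x <= C) ->
  (\int[mu]_(x in D) (f x)%:E <= C%:E)%E.
Proof.
move=> mD mD1 C0 fC; rewrite -[C%:E]mule1 -mD1; rewrite integralE -(integral_cst mu mD C%:E).
have h1 : (\int[mu]_(x in D) ((fun x => (f x)%:E)^\+ x) <= \int[mu]_(x in D) cst C%:E x)%E.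
  apply: le_integral_nomeas => x Dx /=.
  - exact: funepos_ge0.
  - by rewrite lee_fin.
  - by rewrite funeposE ge_max lee_fin fC // lee_fin C0.
have h2 : (0 <= \int[mu]_(x in D) ((fun x => (f x)%:E)^\- x))%E.
  by apply: integral_ge0 => x _; exact: funeneg_ge0.
by have := leeB h1 h2; rewrite sube0.
Qed.

Lemma int_le_Ce (d : measure_display) (T : measurableType d) (R : realType)
  (mu : measure T R) (D : set T) (f : T -> \bar R) (c : R) :
  measurable D -> mu D = 1%E -> 0 <= c -> (forall x, D x -> (0 <= f x)%E) ->
  (forall x, D x -> (f x <= c%:E)%E) ->
  (\int[mu]_(x in D) f x <= c%:E)%E.
Proof.
move=> mD mD1 c0 f0 fc.
apply: le_trans (@le_integral_nomeas _ _ R mu D _ (cst c%:E) f0 _ fc) _.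
  by move=> x _; rewrite lee_fin.
by rewrite integral_cst // mD1 mule1.
Qed.

Lemma leb01 (R : realType) : lebesgue_measure (`]0%R, 1%R[ : set R) = 1%E.
Proof. by rewrite lebesgue_measure_itv /= lte_fin ltr01 sube0. Qed.


Lemma pw_lemma (R : realType) (a b : R) : 0 < a -> 0 < b ->
  a `^ (3 / 2) / b `^ (1 / 2) = a * Num.sqrt (a / b).
Proof.
move=> my0 mx0.
have -> : (3 / 2 : R) = 1 + 2^-1 by lra.
rewrite powRD; last by rewrite gt_eqF // implybT.
rewrite powRr1 ?(ltW my0) // powR12_sqrt ?(ltW my0) // div1r powR12_sqrt ?(ltW mx0) //.
by rewrite sqrtrM ?(ltW my0) // sqrtrV ?(ltW mx0) // mulrA.
Qed.

Lemma s1_lemma (R : realType) (e : R) : 0 <= e -> e < 2 ->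
  1 <= Num.sqrt (2 / (2 - 1 * e)).
Proof.
move=> e4 h2; rewrite mul1r.
have d0 : 0 < 2 - e by lra.
rewrite -{1}sqrtr1 ler_sqrt; last by rewrite divr_ge0 // ltW.
by rewrite ler_pdivlMr // mul1r; lra.
Qed.

Lemma ex_lemma (R : realType) (sigma eps D : R) : 0 < sigma -> 0 < eps ->
  - (1 / (2 * eps ^+ 2)) * ((Num.sqrt (2 * sigma ^+ 2))^-1 * D) ^+ 2 <=
  - ((1 - 8 * 1 * sigma ^+ 2 * eps ^+ 4) / (4 * sigma ^+ 2 * eps ^+ 2)) * D ^+ 2.
Proof.
move=> s0 e0.
rewrite exprMn exprVn sqr_sqrtr; last by rewrite mulr_ge0 // sqr_ge0.
have en : eps != 0 by rewrite gt_eqF.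
have sn : sigma != 0 by rewrite gt_eqF.
have -> : - (1 / (2 * eps ^+ 2)) * ((2 * sigma ^+ 2)^-1 * D ^+ 2) =
          - (1 / (4 * sigma ^+ 2 * eps ^+ 2)) * D ^+ 2.
  by field; rewrite en sn.
apply: ler_wpM2r; first exact: sqr_ge0.
rewrite lerN2 ler_pM2r; last by rewrite invr_gt0 !mulr_gt0 // exprn_gt0.
have : 0 <= 8 * 1 * sigma ^+ 2 * eps ^+ 4.
  apply: mulr_ge0; last by apply: exprn_ge0; exact: ltW.
  by apply: mulr_ge0; [lra|exact: sqr_ge0].
lra.
Qed.

Lemma s2_lemma (R : realType) (eps g : R) : 0 < eps -> 1 <= expR (2 * 1 * eps ^+ 2 * g ^+ 2).
Proof.
move=> e0; rewrite -expR0 ler_expR.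
apply: mulr_ge0; last exact: sqr_ge0.
apply: mulr_ge0; last by apply: exprn_ge0; exact: ltW.
by apply: mulr_ge0.
Qed.

Lemma key_real (R : realType) (a qi b X Y E s1 s2 : R) :
  0 <= a -> 0 <= qi -> 0 <= b -> 0 <= E -> 0 <= X -> X <= Y -> 1 <= s1 -> 1 <= s2 ->
  a * qi * b * X * E <= E * s1 * s2 * (a * b) * (1 * qi) * Y.
Proof.
move=> a0 q0 b0 E0 X0 XY s10 s20.
have Z0 : 0 <= a * qi * b * E by rewrite !mulr_ge0.
have -> : a * qi * b * X * E = (a * qi * b * E) * X by ring.
have -> : E * s1 * s2 * (a * b) * (1 * qi) * Y = (a * qi * b * E) * (s1 * s2 * Y) by ring.
apply: ler_wpM2l => //.
have Y0 : 0 <= Y by lra.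
have : 1 <= s1 * s2 by rewrite -[1]mulr1; apply: ler_pM => //.
move=> h; apply: le_trans (_ : 1 * Y <= _); first by rewrite mul1r.
by apply: ler_wpM2r.
Qed.

Theorem lemma4p20 (R : realType) (LL sigma : R) (V p : R -> R)
  (d : measure_display) (Omega : measurableType d) (P : probability Omega R)
  (N : R -> R -> R -> R -> Omega -> R) :
  0 < LL -> 0 < sigma ->
  C2 V -> C2 p -> V 0 = 0 -> p 0 = 0 -> (forall x, p (x + LL) = p x) ->
  (exists L : R, forall x y, `|derive1 V x - derive1 V y| <= L * `|x - y|) ->
  (exists beta Rr : R, 0 < beta /\ 1 <= Rr /\
     forall x, Rr <= `|x| -> - (Num.sg x * derive1 V x) <= - (beta * `|x|)) ->
  (* the process N: jointly measurable in (u, omega), with Gaussian marginals *)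
  (forall h a b : R,
     measurable_fun ((`]0, 1[ : set R) `*` (setT : set Omega)) (fun z : R * Omega => N h a b z.1 z.2)) ->
  (forall h a b u : R, 0 < h -> 0 < u < 1 ->
     forall A : set R, measurable A ->
       P (N h a b u @^-1` A) =
       normal_prob (a + u * (b - a)) (Num.sqrt (h * u * (1 - u))) A) ->
  exists K1 K2 : R, 0 < K1 /\ 0 < K2 /\
  exists eps0 : R, 0 < eps0 /\
  forall eps : R, 0 < eps -> eps < eps0 ->
    K1 * eps ^+ 4 < Num.min 2 (1 / (8 * sigma ^+ 2)) ->
    forall x y : R,
      (peps V p sigma P N eps (eps ^+ 2) x y <=
       (expR (K2 / 2) * Num.sqrt (2 / (2 - K1 * eps ^+ 4))
        * expR (2 * K1 * eps ^+ 2 * (geps V p sigma eps x) ^+ 2)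
        * (meps V p sigma eps y `^ (3/2) / meps V p sigma eps x `^ (1/2))
        * (1 / Num.sqrt (2 * pi * eps ^+ 2))
        * expR (- ((1 - 8 * K1 * sigma ^+ 2 * eps ^+ 4) / (4 * sigma ^+ 2 * eps ^+ 2))
                * (geps V p sigma eps y - geps V p sigma eps x) ^+ 2))%:E)%E.
Proof.
move=> LL0 s0 [dV [dV1 cV2]] [dp [dp1 cp2]] V00 p00 pper [L hL]
  [beta [Rr [b0 [R1 hV]]]] _ _.
have [MV VB] := @V_lower R V beta Rr dV b0 R1 hV.
have cp : continuous p.
  by move=> x; apply: differentiable_continuous; exact/derivable1_diffP.
have [Mp [Mp0 pB]] := @periodic_bounded R p LL LL0 cp pper.
have p1per := @periodic_derive1 R p LL pper.
have p2per := @periodic_derive1 R _ LL p1per.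
have [M2 [M20 hM]] := @periodic_bounded R _ LL LL0 cp2 p2per.
have hLb x : `|derive1 (derive1 V) x| <= L := @deriv_lip_bound R (derive1 V) L x hL (dV1 x).
have L0 : 0 <= L := le_trans (normr_ge0 _) (hLb 0).
exists 1, (L + M2 + 1); split; first exact: ltr01.
split; first lra.
exists 1; split; first exact: ltr01.
move=> eps e0 e1 hK x y.
set K := L + M2 + 1.
pose C := (L + M2 / eps ^+ 2) / 2.
have C0 : 0 <= C by rewrite /C divr_ge0 // addr_ge0 // divr_ge0 // exprn_ge0 // ltW.
have Bb z : Beps V p eps z <= C := @Beps_bound R V p eps L M2 e0 dV1 dp1 hLb hM z.
have inner (w : Omega) : (\int[lebesgue_measure]_(u in `]0%R, 1%R[)
   (Beps V p eps (N (eps ^+ 2) (geps V p sigma eps x) (geps V p sigma eps y) u w))%:E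
   <= C%:E)%E.
  have := @int_le_C _ _ R lebesgue_measure `]0%R, 1%R[
    (fun u => Beps V p eps (N (eps ^+ 2) (geps V p sigma eps x) (geps V p sigma eps y) u w))
    C (measurable_itv _) (leb01 R) C0 (fun u _ => Bb _).
  by [].
have e2 : eps ^+ 2 <= 1 by rewrite exprn_ile1 // ltW.
have e20 : 0 <= eps ^+ 2 by rewrite exprn_ge0 // ltW.
have hC : eps ^+ 2 * C <= K / 2.
  have -> : eps ^+ 2 * C = (eps ^+ 2 * L + M2) / 2.
    rewrite /C mulrA mulrDr mulrCA divff ?mulr1 //.
    by rewrite expf_neq0 // gt_eqF.
  have : eps ^+ 2 * L <= L by rewrite ler_piMl.
  rewrite /K; lra.
have hexp (w : Omega) : (expeR ((eps ^+ 2)%:E * \int[lebesgue_measure]_(u in `]0%R, 1%R[)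
   (Beps V p eps (N (eps ^+ 2) (geps V p sigma eps x) (geps V p sigma eps y) u w))%:E)
   <= (expR (K / 2))%:E)%E.
  apply: (@le_trans _ _ (expeR (K / 2)%:E)); last by [].
  rewrite lee_expeR.
  have e2E : (0 <= (eps ^+ 2)%:E)%E by rewrite lee_fin.
  apply: le_trans (lee_wpmul2l e2E (inner w)) _.
  by rewrite -EFinM lee_fin.
have outer : (\int[P]_(w in setT) expeR ((eps ^+ 2)%:E * \int[lebesgue_measure]_(u in `]0%R, 1%R[)
   (Beps V p eps (N (eps ^+ 2) (geps V p sigma eps x) (geps V p sigma eps y) u w))%:E)
   <= (expR (K / 2))%:E)%E.
  apply: (@int_le_Ce _ _ R P setT _ _ measurableT (probability_setT P)).
  - by rewrite expR_ge0.
  - by move=> w _; exact: expeR_ge0.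
  - by move=> w _; exact: hexp.
rewrite /peps.
set A := (X in (X%:E * _ <= _)%E).
have mx0 := @meps_gt0 R V p sigma eps s0 dV dp x.
have my0 := @meps_gt0 R V p sigma eps s0 dV dp y.
have A0 : 0 <= A.
  rewrite /A; apply: mulr_ge0; last exact: expR_ge0.
  apply: mulr_ge0; last exact: sqrtr_ge0.
  by apply: divr_ge0; [exact: ltW|exact: sqrtr_ge0].
have A0E : (0 <= A%:E)%E by rewrite lee_fin.
apply: le_trans (lee_wpmul2l A0E outer) _.
rewrite -EFinM lee_fin /A.
rewrite (@oint_meps R V p sigma eps MV Mp s0 dV dp VB pB x y).
set a := meps V p sigma eps y; set b := meps V p sigma eps x.
set gx := geps V p sigma eps x; set gy := geps V p sigma eps y.
rewrite (@pw_lemma R _ _ my0 mx0).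
have s1 : 1 <= Num.sqrt (2 / (2 - 1 * eps ^+ 4)).
  have h2 : eps ^+ 4 < 2 by move: hK; rewrite mul1r lt_min => /andP[].
  apply: (@s1_lemma R) => //; apply: exprn_ge0; exact: ltW.
have s2 := @s2_lemma R eps gx e0.
have ex : expR (- (1 / (2 * eps ^+ 2)) * ((S sigma)^-1 * (gy - gx)) ^+ 2) <=
  expR (- ((1 - 8 * 1 * sigma ^+ 2 * eps ^+ 4) / (4 * sigma ^+ 2 * eps ^+ 2)) *
     (gy - gx) ^+ 2).
  by rewrite ler_expR; apply: (@ex_lemma R).
have q0 : 0 <= (Num.sqrt (2 * pi * eps ^+ 2))^-1 by rewrite invr_ge0 sqrtr_ge0.
have KR := @key_real R a (Num.sqrt (2 * pi * eps ^+ 2))^-1 (Num.sqrt (a / b)) _ _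
  (expR (K / 2)) _ _ (ltW my0) q0 (sqrtr_ge0 _) (expR_ge0 _) (expR_ge0 _) ex s1 s2.
exact: KR.
Qed.
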